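(* Let $\mathfrak m_1,\mathfrak m_1^*,\mathfrak m_2,\mathfrak m_2^*$ be complex-valued functions on the edges of the lattice strip, and $\phi_j=\int_{\gamma_0}\big(\mathfrak m_j(z)\psi(z)\,dz+\mathfrak m_j^*(z)\psi^*(z)\,d\bar z\big)$ for $j=1,2$. Then $$\phi_1\phi_2+\phi_2\phi_1=\Big(\int_{\gamma_0}\big(-2\,\mathfrak m_1(z)\mathfrak m_2(z)\,dz+2\,\mathfrak m_1^*(z)\mathfrak m_2^*(z)\,d\bar z\big)\Big)\,\mathrm{id}.$$
   Context: Fix integers $a<0<b$, $C=\{a,\dots,b\}$, $C^*=\{a+\frac12,\dots,b-\frac12\}$. $\tilde V$ has basis $(e_\rho)_{\rho\in\{\pm1\}^C}$. For $x'\in C^*$, $\varsigma_{x'}(\rho)$ flips the signs of $\rho_x$ for $x<x'$; $\psi_{x'}e_\rho=\frac{-\rho_{x'-1/2}+i\rho_{x'+1/2}}{\sqrt2}e_{\varsigma_{x'}(\rho)}$, $\psi^*_{x'}e_\rho=\frac{-i\rho_{x'-1/2}+\rho_{x'+1/2}}{\sqrt2}e_{\varsigma_{x'}(\rho)}$. The lattice strip has vertices $C\times\mathbb Z\subset\mathbb C$ and nearest-neighbour edges identified with midpoints; on horizontal edges $x'\in C^*$ at height 0, $\psi(x')=\psi_{x'}$, $\psi^*(x')=\psi^*_{x'}$. $\gamma_0=(a,a+1,\dots,b)$, and for a contour $(w_0,\dots,w_m)$ with $z_j$ the edge joining $w_{j-1},w_j$, $\int(\mathfrak m\psi\,dz+\mathfrak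 m^*\psi^*\,d\bar z)=\sum_j(\mathfrak m(z_j)\psi(z_j)(w_j-w_{j-1})+\mathfrak m^*(z_j)\psi^*(z_j)\overline{(w_j-w_{j-1})})$; scalar integrals $\int(g\,dz+h\,d\bar z)=\sum_j(g(z_j)(w_j-w_{j-1})+h(z_j)\overline{(w_j-w_{j-1})})$. *)

(* Defs.v *)
From HB Require Import structures.
From mathcomp Require Import all_boot all_order all_algebra.
Set Implicit Arguments. Unset Strict Implicit. Unset Printing Implicit Defensive.
Import Order.TTheory GRing.Theory Num.Theory.
Local Open Scope ring_scope.

(* Complex numbers: an arbitrary numeric closed field C (e.g. the complexes),
   with imaginary unit 'i, conjugation z^* and square root sqrtC. *)

(* Sites C = {a,...,b}: index k : 'I_(nsites a b) stands for site a + k. *)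
Definition nsites (a b : int) : nat := (absz (b - a)).+1.

(* spin configurations rho in {+-1}^C ; true = +1, false = -1 *)
Notation spin a b := {ffun 'I_(nsites a b) -> bool}.

Notation Vt C a b := {ffun spin a b -> C^o}.

Definition ebasis (C : numClosedFieldType) (a b : int) (r : spin a b) : Vt C a b :=
  [ffun s => (s == r)%:R].

Definition sgnC (C : numClosedFieldType) (s : bool) : C := if s then 1 else -1.

Definition rho_at (C : numClosedFieldType) (a b : int) (r : spin a b) (x : int) : C :=
  if (a <= x) && (x <= b) then sgnC C (r (inord (absz (x - a)))) else 0.

(* A half-integer x' in C^* is written x' = xl + 1/2 with xl : int, a <= xl < b.
   varsigma_{x'} flips rho_x for all sites x < x', i.e. x <= xl. *)
Definition vsigma (a b : int) (xl : int) (r : spin a b) : spin a b :=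
  [ffun k : 'I_(nsites a b) => if a + (k : nat)%:Z <= xl then ~~ r k else r k].

Definition psi_op (C : numClosedFieldType) (a b : int) (xl : int)
    (v : Vt C a b) : Vt C a b :=
  \sum_(r : spin a b) v r *:
     (((- rho_at C r xl + 'i * rho_at C r (xl + 1)) / sqrtC 2) *: ebasis C (vsigma xl r)).

Definition psis_op (C : numClosedFieldType) (a b : int) (xl : int)
    (v : Vt C a b) : Vt C a b :=
  \sum_(r : spin a b) v r *:
     (((- 'i * rho_at C r xl + rho_at C r (xl + 1)) / sqrtC 2) *: ebasis C (vsigma xl r)).

(* Points of the lattice strip are written in doubled coordinates (X, Y) = (2 Re z, 2 Im z);
   vertices are (x, y) in Z x Z, an edge is identified with its midpoint, whose
   doubled coordinates are (x0 + x1, y0 + y1).  Functions on edges are modelled as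
   functions int -> int -> _ of the doubled midpoint coordinates (values off edges
   are irrelevant). *)

Definition vtxC (C : numClosedFieldType) (w : int * int) : C := w.1%:~R + 'i * w.2%:~R.

Definition cint (C : numClosedFieldType) (p : seq (int * int))
    (g h : int -> int -> C) : C :=
  \sum_(j < (size p).-1)
    let w0 := nth (0, 0) p j in
    let w1 := nth (0, 0) p j.+1 in
    let X := w0.1 + w1.1 in let Y := w0.2 + w1.2 in
    let d := vtxC C w1 - vtxC C w0 in
    g X Y * d + h X Y * d^*.

Definition opint (C : numClosedFieldType) (a b : int) (p : seq (int * int))
    (m ms : int -> int -> C) (psi psis : int -> int -> Vt C a b -> Vt C a b)
    (v : Vt C a b) : Vt C a b :=
  \sum_(j < (size p).-1)
    let w0 := nth (0, 0) p j in
    let w1 := nth (0, 0) p j.+1 in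
    let X := w0.1 + w1.1 in let Y := w0.2 + w1.2 in
    let d := vtxC C w1 - vtxC C w0 in
    ((m X Y * d) *: psi X Y v + (ms X Y * d^*) *: psis X Y v).

Definition gamma0 (a b : int) : seq (int * int) :=
  [seq (a + (k : nat)%:Z, 0%Z) | k <- iota 0 (absz (b - a)).+1].

(* Main.v *)
Require Import Defs.
From HB Require Import structures.
From mathcomp Require Import all_boot all_order all_algebra ring zify.
Import Order.TTheory GRing.Theory Num.Theory.
Local Open Scope ring_scope.

Section S.
Variables (C : numClosedFieldType) (a b : int).

Lemma vsigmaK xl : involutive (@vsigma a b xl).
Proof. by move=> r; apply/ffunP=> k; rewrite /vsigma !ffunE; case: ifP => h; rewrite ?h ?negbK. Qed.

Lemma vsigmaC x y r : @vsigma a b x (vsigma y r) = vsigma y (vsigma x r).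
Proof. by apply/ffunP=> k; rewrite /vsigma !ffunE; by case: (a + _ <= x)%R; case: (a + _ <= y)%R. Qed.

Lemma rho_vsigma yl (r : spin a b) x :
  rho_at C (vsigma yl r) x = if x <= yl then - rho_at C r x else rho_at C r x.
Proof.
rewrite /rho_at; case: ifP => hx; last by case: ifP => //; rewrite oppr0.
rewrite /vsigma ffunE inordK; last by case/andP: hx => h1 h2; rewrite /nsites; lia.
have -> : a + (absz (x - a))%:Z = x by case/andP: hx => h1 h2; lia.
by case: ifP => //; case: (r _); rewrite /sgnC /= ?opprK.
Qed.

Lemma rho_sq (r : spin a b) x : a <= x <= b -> rho_at C r x ^+ 2 = 1.
Proof. by rewrite /rho_at => ->; case: (r _); rewrite /sgnC ?sqrrN expr1n. Qed.

Lemma opsum_apply (s : spin a b -> spin a b) (sK : involutive s) (c : spin a b -> C)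
  (v : Vt C a b) (t : spin a b) :
  (\sum_r v r *: (c r *: ebasis C (s r))) t = v (s t) * c (s t).
Proof.
rewrite sum_ffunE (bigD1 (s t)) //= big1 ?addr0.
  by rewrite !ffunE sK eqxx /GRing.scale /= mulr1.
move=> r hr; rewrite !ffunE (_ : (t == s r) = false) /GRing.scale /= ?mulr0 //.
by apply/negbTE; apply: contra hr => /eqP ->; rewrite sK.
Qed.

Definition cc xl (u : spin a b) : C := (- rho_at C u xl + 'i * rho_at C u (xl + 1)) / sqrtC 2.
Definition cs xl (u : spin a b) : C := (- 'i * rho_at C u xl + rho_at C u (xl + 1)) / sqrtC 2.
Definition q (m ms : int -> int -> C) xl u := m (2*xl+1) 0 * cc xl u + ms (2*xl+1) 0 * cs xl u.

Lemma psi_apply xl v t : @psi_op C a b xl v t = v (vsigma xl t) * cc xl (vsigma xl t).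
Proof. rewrite /psi_op; exact: (opsum_apply _ (@vsigmaK xl) (cc xl) v t). Qed.
Lemma psis_apply xl v t : @psis_op C a b xl v t = v (vsigma xl t) * cs xl (vsigma xl t).
Proof. rewrite /psi_op /psis_op; exact: (opsum_apply _ (@vsigmaK xl) (cs xl) v t). Qed.

Lemma gamma_nth (j : nat) : (j < (absz (b - a)).+1)%N -> nth (0,0) (gamma0 a b) j = (a + j%:Z, 0%Z).
Proof. by move=> h; rewrite /gamma0 (nth_map 0%N) ?size_iota // nth_iota. Qed.

Lemma vtx_diff (x : int) : vtxC C (x + 1, 0%Z) - vtxC C (x, 0%Z) = 1.
Proof. rewrite /vtxC /= intrD; ring. Qed.

Lemma opint_apply (hab : a < b) psi psis
    (hpsi : forall xl : int, a <= xl < b ->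
        psi (2 * xl + 1) 0 = @psi_op C a b xl /\ psis (2 * xl + 1) 0 = @psis_op C a b xl)
    m ms v t :
  opint (gamma0 a b) m ms psi psis v t =
  \sum_(j < absz (b - a)) v (vsigma (a + j%:Z) t) * q m ms (a + j%:Z) (vsigma (a + j%:Z) t).
Proof.
rewrite /opint size_map size_iota /= sum_ffunE; apply: eq_bigr => j _.
have hj := ltn_ord j.
cbv beta zeta; rewrite !(@nth_map _ 0%N) ?size_iota ?nth_iota; try lia.
rewrite /= add0n addr0.
have -> : a + j%:Z + (a + (1 + j)%N%:Z) = 2 * (a + j%:Z) + 1 by lia.
have -> : a + (1 + j)%N%:Z = (a + j%:Z) + 1 by lia.
rewrite vtx_diff conjC1 !mulr1.
have [-> ->] := hpsi (a + j%:Z) ltac:(lia).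
rewrite !ffunE psi_apply psis_apply /q /GRing.scale /=; ring.
Qed.

Lemma cint_gamma (hab : a < b) g h :
  @cint C (gamma0 a b) g h = \sum_(j < absz (b - a)) (g (2 * (a + j%:Z) + 1) 0 + h (2 * (a + j%:Z) + 1) 0).
Proof.
rewrite /cint size_map size_iota /=; apply: eq_bigr => j _.
have hj := ltn_ord j.
cbv beta zeta; rewrite !(@nth_map _ 0%N) ?size_iota ?nth_iota; try lia.
rewrite /= add0n addr0.
have -> : a + j%:Z + (a + (1 + j)%N%:Z) = 2 * (a + j%:Z) + 1 by lia.
have -> : a + (1 + j)%N%:Z = (a + j%:Z) + 1 by lia.
by rewrite vtx_diff conjC1 !mulr1.
Qed.

Lemma alg (A B I s m1 m2 s1 s2 : C) : A ^+ 2 = 1 -> B ^+ 2 = 1 -> I ^+ 2 = -1 -> s ^+ 2 = 2 ->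
  (m2 * ((- A + I * B) / s) + s2 * ((- I * A + B) / s)) *
    (m1 * ((- - A + I * B) / s) + s1 * ((- I * - A + B) / s)) +
  (m1 * ((- A + I * B) / s) + s1 * ((- I * A + B) / s)) *
    (m2 * ((- - A + I * B) / s) + s2 * ((- I * - A + B) / s)) =
  -2 * m1 * m2 + 2 * s1 * s2.
Proof.
move=> hA hB hI hs.
have s0 : s != 0 by apply/eqP => h0; move: hs; rewrite h0 expr0n /= => /eqP; rewrite eq_sym pnatr_eq0.
have t0 : (2 : C) != 0 by rewrite pnatr_eq0.
transitivity ((2 * m1 * m2 * (I ^+ 2 * B ^+ 2 - A ^+ 2) + 2 * s1 * s2 * (B ^+ 2 - I ^+ 2 * A ^+ 2)
   + (m2 * s1 + m1 * s2) * 2 * I * (B ^+ 2 - A ^+ 2)) / s ^+ 2).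
  by field.
rewrite hA hB hI hs; field; by rewrite ?t0.
Qed.

Lemma cc_shift xl yl u : xl != yl ->
  cc xl (vsigma yl u) = if xl < yl then - cc xl u else cc xl u.
Proof.
move=> hne; rewrite /cc !rho_vsigma.
have [h|h] : xl < yl \/ yl < xl by lia.
  rewrite h (_ : (xl <= yl) = true); last by lia.
  rewrite (_ : (xl + 1 <= yl) = true); last by lia.
  ring.
rewrite (_ : (xl < yl) = false); last by lia.
rewrite (_ : (xl <= yl) = false); last by lia.
by rewrite (_ : (xl + 1 <= yl) = false); last by lia.
Qed.

Lemma cs_shift xl yl u : xl != yl ->
  cs xl (vsigma yl u) = if xl < yl then - cs xl u else cs xl u.
Proof.
move=> hne; rewrite /cs !rho_vsigma.
have [h|h] : xl < yl \/ yl < xl by lia.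
  rewrite h (_ : (xl <= yl) = true); last by lia.
  rewrite (_ : (xl + 1 <= yl) = true); last by lia.
  ring.
rewrite (_ : (xl < yl) = false); last by lia.
rewrite (_ : (xl <= yl) = false); last by lia.
by rewrite (_ : (xl + 1 <= yl) = false); last by lia.
Qed.

Lemma q_shift m ms xl yl u : xl != yl ->
  q m ms xl (vsigma yl u) = if xl < yl then - q m ms xl u else q m ms xl u.
Proof.
move=> hne; rewrite /q cc_shift // cs_shift //; case: ifP => _ //; ring.
Qed.

Lemma offdiag m1 ms1 m2 ms2 xl yl (t : spin a b) : xl != yl ->
  q m1 ms1 xl (vsigma xl t) * q m2 ms2 yl (vsigma yl (vsigma xl t)) +
  q m1 ms1 xl (vsigma xl (vsigma yl t)) * q m2 ms2 yl (vsigma yl t) = 0.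
Proof.
move=> hne.
set u := vsigma yl (vsigma xl t).
have e1 : vsigma xl t = vsigma yl u by rewrite /u vsigmaK.
have e2 : vsigma xl (vsigma yl t) = u by rewrite /u vsigmaC.
have e3 : vsigma yl t = vsigma xl u by rewrite /u vsigmaC vsigmaK.
rewrite e2 e3 e1 q_shift // q_shift 1?eq_sym //.
have [h|h] : xl < yl \/ yl < xl by lia.
  rewrite h (_ : yl < xl = false); [ring|lia].
rewrite h (_ : xl < yl = false); [ring|lia].
Qed.

Lemma diag m1 ms1 m2 ms2 xl (t : spin a b) : a <= xl < b ->
  q m2 ms2 xl t * q m1 ms1 xl (vsigma xl t) + q m1 ms1 xl t * q m2 ms2 xl (vsigma xl t) =
  -2 * m1 (2 * xl + 1) 0 * m2 (2 * xl + 1) 0 + 2 * ms1 (2 * xl + 1) 0 * ms2 (2 * xl + 1) 0.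
Proof.
move=> hx; rewrite /q /cc /cs !rho_vsigma lexx (_ : xl + 1 <= xl = false); last lia.
apply: alg; [apply: rho_sq; lia | apply: rho_sq; lia | exact: sqrCi | exact: sqrtCK].
Qed.
End S.

Theorem proposition3p12 (C : numClosedFieldType) (a b : int)
    (ha : a < 0) (hb : 0 < b)
    (psi psis : int -> int -> Vt C a b -> Vt C a b)
    (hpsi : forall xl : int, a <= xl < b ->
        psi (2 * xl + 1) 0 = @psi_op C a b xl /\ psis (2 * xl + 1) 0 = @psis_op C a b xl)
    (m1 m1s m2 m2s : int -> int -> C) :
  let phi1 := opint (gamma0 a b) m1 m1s psi psis in
  let phi2 := opint (gamma0 a b) m2 m2s psi psis in
  forall v : Vt C a b,
    phi1 (phi2 v) + phi2 (phi1 v) =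
    @cint C (gamma0 a b) (fun X Y => -2 * m1 X Y * m2 X Y)
                        (fun X Y => 2 * m1s X Y * m2s X Y) *: v.
Proof.
move=> phi1 phi2 v; apply/ffunP => t.
have hab : a < b by lia.
rewrite !ffunE /phi1 /phi2 !(@opint_apply C a b hab psi psis hpsi) (@cint_gamma C a b hab) /=.
under eq_bigr do rewrite (@opint_apply C a b hab psi psis hpsi).
under [X in _ + X = _]eq_bigr do rewrite (@opint_apply C a b hab psi psis hpsi).
under eq_bigr do rewrite big_distrl /=.
under [X in _ + X = _]eq_bigr do rewrite big_distrl /=.
rewrite [X in _ + X = _]exchange_big -big_split /= /GRing.scale /= big_distrl /=.
apply: eq_bigr => i _; rewrite -big_split /= (bigD1 i) //= big1 ?addr0.
  rewrite !vsigmaK.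
  transitivity (v t * (q C a b m2 m2s (a + i%:Z) t * q C a b m1 m1s (a + i%:Z) (vsigma (a + i%:Z) t) +
     q C a b m1 m1s (a + i%:Z) t * q C a b m2 m2s (a + i%:Z) (vsigma (a + i%:Z) t))); first ring.
  rewrite diag; [ring | have := ltn_ord i; lia].
move=> j hji.
have hne : a + i%:Z != a + j%:Z.
  by apply: contra hji => /eqP h; apply/eqP/val_inj => /=; lia.
have e : vsigma (a + i%:Z) (vsigma (a + j%:Z) t) = vsigma (a + j%:Z) (vsigma (a + i%:Z) t)
  := vsigmaC _ _ _ _ _.
transitivity (v (vsigma (a + j%:Z) (vsigma (a + i%:Z) t)) *
  (q C a b m1 m1s (a + i%:Z) (vsigma (a + i%:Z) t) *
     q C a b m2 m2s (a + j%:Z) (vsigma (a + j%:Z) (vsigma (a + i%:Z) t)) +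
   q C a b m1 m1s (a + i%:Z) (vsigma (a + i%:Z) (vsigma (a + j%:Z) t)) *
     q C a b m2 m2s (a + j%:Z) (vsigma (a + j%:Z) t))).
  rewrite e; ring.
by rewrite offdiag // mulr0.
Qed.
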